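(* Let $0<q\leq 1$, let $D\in\mathbb{R}^{n\times d}$ be a frame with frame bounds $0<\mathcal{L}\leq\mathcal{U}<\infty$, $\kappa=\mathcal{U}/\mathcal{L}$, let $A\in\mathbb{R}^{m\times n}$, let $s<a$ be positive integers and $\rho=s/a$. Assume $A$ satisfies the $(D^{\dagger},q)$-RIP of order $s+a$ (with constants $\delta_a$ and $\delta_{s+a}<1$), and let $\Delta=\frac{1+\delta_a}{1-\delta_{s+a}}$. Then for any $h\in\mathbb{R}^n$, with $T$ the index set of the $s$ largest entries of $D^*h$ in magnitude, $$\|D_T^*h\|_q^{q}\leq\theta\|D_{T^c}^*h\|_q^q+\frac{\theta\mathcal{L}^{q/2}a^{1-q/2}\|Ah\|_q^q}{1+\delta_a},$$ where $$\theta=2^{-q/2}\left(1+\sqrt{1+4\kappa^{-2}\Delta^{-2/q}}\right)^{q/2}\kappa^q\Delta\rho^{1-q/2}.$$ In particular, if $\rho^{1-q/2}\left(\rho^{2/q-1}+1\right)^{q/2}\kappa^q(1+\delta_a)<1-\delta_{s+a}$, then $\theta<1$.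
   Context: $D$ is a frame with frame bounds $\mathcal{L},\mathcal{U}$ if $\mathcal{L}\|f\|_2^2\leq\|D^*f\|_2^2\leq\mathcal{U}\|f\|_2^2$ for all $f\in\mathbb{R}^n$; $D^{\dagger}=(DD^* )^{-1}D$. $A$ obeys the $(D^\dagger,q)$-RIP of order $k$ with constant $\delta\in[0,1)$ if $(1-\delta)\|D^\dagger v\|_2^q\leq\|AD^\dagger v\|_q^q\leq(1+\delta)\|D^\dagger v\|_2^q$ for all $v\in\mathbb{R}^d$ with at most $k$ nonzero entries; $\delta_k$ is the smallest such $\delta$. For $S\subset[d]$, $D_S^*h$ denotes $D^*h$ restricted to $S$, and $T^c=[d]\setminus T$. *)

(* Defs.v *)
From HB Require Import structures.
From mathcomp Require Import all_boot all_order all_algebra.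
From mathcomp Require Import reals exp.
Set Implicit Arguments. Unset Strict Implicit. Unset Printing Implicit Defensive.
Import Order.TTheory GRing.Theory Num.Theory.
Local Open Scope ring_scope.

Section Defs.
Variable R : realType.

Definition norm2 k (x : 'cV[R]_k) : R := Num.sqrt (\sum_(i < k) x i 0 ^+ 2).

Definition normq_q k (q : R) (x : 'cV[R]_k) : R := \sum_(i < k) `|x i 0| `^ q.

Definition normq_q_on k (q : R) (x : 'cV[R]_k) (S : {set 'I_k}) : R :=
  \sum_(i in S) `|x i 0| `^ q.

(* D (n x d) is a frame with frame bounds L, U; D^* is D^T *)
Definition is_frame n d (D : 'M[R]_(n, d)) (L U : R) : Prop :=
  forall f : 'cV[R]_n,
    L * norm2 f ^+ 2 <= norm2 (D^T *m f) ^+ 2 <= U * norm2 f ^+ 2.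

Definition dagger n d (D : 'M[R]_(n, d)) : 'M[R]_(n, d) := invmx (D *m D^T) *m D.

Definition ksparse d (k : nat) (v : 'cV[R]_d) : Prop :=
  (#|[set i | v i ord0 != 0%R]| <= k)%N.

Definition DqRIP m n d (A : 'M[R]_(m, n)) (D : 'M[R]_(n, d)) (q : R) (k : nat)
    (delta : R) : Prop :=
  0 <= delta < 1 /\
  forall v : 'cV[R]_d, ksparse k v ->
    (1 - delta) * norm2 (dagger D *m v) `^ q <= normq_q q (A *m (dagger D *m v))
    <= (1 + delta) * norm2 (dagger D *m v) `^ q.

Definition RIP_const m n d (A : 'M[R]_(m, n)) (D : 'M[R]_(n, d)) (q : R) (k : nat)
    (delta : R) : Prop :=
  DqRIP A D q k delta /\ forall delta', DqRIP A D q k delta' -> delta <= delta'.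

Definition largest_set d (s : nat) (x : 'cV[R]_d) (T : {set 'I_d}) : Prop :=
  #|T| = s /\ forall i j, i \in T -> j \notin T -> `|x j 0| <= `|x i 0|.

End Defs.

(* Main.v *)
Require Import Defs.
From HB Require Import structures.
From mathcomp Require Import all_boot all_order all_algebra.
From mathcomp Require Import reals exp.
From Stdlib Require Import Lia.
From mathcomp Require Import ring lra zify.
Import Order.TTheory GRing.Theory Num.Theory.
Local Open Scope ring_scope.
Set Implicit Arguments. Unset Strict Implicit. Unset Printing Implicit Defensive.

Section Pow.
Variable R : realType.

Lemma powR_subadd (q c d : R) : 0 < q -> q <= 1 -> 0 <= c -> 0 <= d ->
  (c + d) `^ q <= c `^ q + d `^ q.
Proof.
move=> q0 q1 c0 d0.
have [->|cn0] := eqVneq c 0; first by rewrite add0r powR0 ?gt_eqF // add0r.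
have [->|dn0] := eqVneq d 0; first by rewrite addr0 powR0 ?gt_eqF // addr0.
have cp : 0 < c by rewrite lt_def cn0 c0.
have dp : 0 < d by rewrite lt_def dn0 d0.
set e := c + d.
have ep : 0 < e by rewrite /e; lra.
have hc : c / e <= (c / e) `^ q.
  apply: ger1_powR => //; apply/andP; split; first by rewrite divr_gt0.
  by rewrite ler_pdivrMr // mul1r /e; lra.
have hd : d / e <= (d / e) `^ q.
  apply: ger1_powR => //; apply/andP; split; first by rewrite divr_gt0.
  by rewrite ler_pdivrMr // mul1r /e; lra.
have Ec : c `^ q = (c / e) `^ q * e `^ q.
  by rewrite -powRM ?divr_ge0 ?ltW // divfK // gt_eqF.
have Ed : d `^ q = (d / e) `^ q * e `^ q.
  by rewrite -powRM ?divr_ge0 ?ltW // divfK // gt_eqF.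
have s1 : c / e + d / e = 1 by rewrite -mulrDl divff // gt_eqF.
rewrite Ec Ed -mulrDl.
have epq : 0 < e `^ q by rewrite powR_gt0.
rewrite -{1}[e `^ q]mul1r ler_pM2r //; lra.
Qed.

Lemma powR_pm (p : R) (I : finType) (T : {set I}) (y : I -> R) :
  0 < p -> p < 1 -> (forall i, 0 <= y i) ->
  \sum_(i in T) y i `^ p <= (#|T|%:R) `^ (1 - p) * (\sum_(i in T) y i) `^ p.
Proof.
move=> p0 p1 y0.
set S := \sum_(i in T) y i.
have S0 : 0 <= S by rewrite /S sumr_ge0.
have [Sz|Snz] := eqVneq S 0.
  rewrite big1 ?mulr_ge0 ?powR_ge0 // => i iT.
  by rewrite (psumr_eq0P _ Sz) // powR0 // gt_eqF.
have Sp : 0 < S by rewrite lt_def Snz S0.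
have nT : (0 < #|T|)%N.
  rewrite card_gt0; apply/eqP => T0.
  by move: Snz; rewrite /S T0 big_set0 eqxx.
set n : R := #|T|%:R.
have np : 0 < n by rewrite /n ltr0n.
set b := n^-1 `^ (1 - p).
have bp : 0 < b by rewrite powR_gt0 // invr_gt0.
have Yi : forall i, (y i / S) `^ p * b <= p * (y i / S) + (1 - p) * n^-1.
  move=> i.
  have := @conjugate_powR R ((y i / S) `^ p) b (p^-1) ((1 - p)^-1)
    (powR_ge0 _ _) (ltW bp).
  rewrite !invrK invr_gt0 p0 invr_gt0 subr_gt0 p1 => /(_ isT isT).
  have -> : p + (1 - p) = 1 by lra.
  move=> /(_ erefl).
  rewrite -!powRrM !divff ?gt_eqF ?subr_gt0 // !powRr1 ?divr_ge0 ?invr_ge0 ?(ltW Sp) ?(ltW np) //.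
  by move=> H; apply: (le_trans H); rewrite [p * _]mulrC [(1 - p) / n]mulrC.
have sum1 : (\sum_(i in T) (y i / S) `^ p) * b <= 1.
  rewrite mulr_suml.
  apply: le_trans (ler_sum _ (fun i _ => Yi i)) _.
  rewrite big_split /= -mulr_sumr -mulr_suml sumr_const -/S mulfV ?gt_eqF //.
  rewrite -mulr_natr -/n -mulrA mulVf ?gt_eqF // mulr1; lra.
have LHS : \sum_(i in T) y i `^ p = (\sum_(i in T) (y i / S) `^ p) * S `^ p.
  rewrite mulr_suml; apply: eq_bigr => i _.
  by rewrite -powRM ?divr_ge0 // divfK // gt_eqF.
have bn : b * n `^ (1 - p) = 1.
  by rewrite -powRM ?invr_ge0 ?ltW // mulVf ?gt_eqF // powR1.
rewrite LHS; apply: ler_wpM2r; first exact: powR_ge0.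
have nb0 : 0 <= n `^ (1 - p) by rewrite powR_ge0.
by have := ler_wpM2r nb0 sum1; rewrite -mulrA bn mulr1 mul1r.
Qed.

End Pow.

Section Alg.
Variable R : realType.

Lemma powR_invr (x r : R) : 0 <= x -> (x^-1) `^ r = (x `^ r)^-1.
Proof. by move=> x0; rewrite -powR_inv1 // -powRrM mulN1r powRN. Qed.

Lemma powR_le_inv (p X Y : R) : 0 < p -> 0 <= X -> 0 <= Y -> X `^ p <= Y -> X <= Y `^ (p^-1).
Proof.
move=> p0 X0 Y0 H.
have -> : X = (X `^ p) `^ (p^-1) by rewrite -powRrM mulfV ?gt_eqF // powRr1.
by apply: ge0_ler_powR; rewrite ?nnegrE ?invr_ge0 ?(ltW p0) ?powR_ge0.
Qed.

Lemma powR_lt1 (p X : R) : 0 < p -> 0 <= X -> X `^ p < 1 -> X < 1.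
Proof.
move=> p0 X0 H; rewrite ltNge; apply/negP => X1.
have : 1 `^ p <= X `^ p by apply: ge0_ler_powR; rewrite ?nnegrE ?(ltW p0) ?ler01.
by rewrite powR1; move: H; rewrite ltNge => /negP.
Qed.

Lemma quad (Y g k : R) : 0 <= Y -> 0 <= g -> 0 < k ->
  Y ^+ 2 <= k * g * (Y + g) ->
  Y <= g * k * ((1 + Num.sqrt (1 + 4 * k^-1)) / 2).
Proof.
move=> Y0 g0 k0 H.
set b := k * g.
have b0 : 0 <= b by rewrite mulr_ge0 // ltW.
have H2 : (2 * Y - b) ^+ 2 <= b ^+ 2 * (1 + 4 * k^-1).
  have -> : b ^+ 2 * (1 + 4 * k^-1) = b ^+ 2 + 4 * b * g.
    by rewrite /b; field; rewrite gt_eqF.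
  have -> : (2 * Y - b) ^+ 2 = 4 * Y ^+ 2 - 4 * b * Y + b ^+ 2 by ring.
  rewrite /b; nra.
have H3 : 2 * Y - b <= b * Num.sqrt (1 + 4 * k^-1).
  have e1 : `|2 * Y - b| = Num.sqrt ((2 * Y - b) ^+ 2) by rewrite sqrtr_sqr.
  have e2 : b * Num.sqrt (1 + 4 * k^-1) = Num.sqrt (b ^+ 2 * (1 + 4 * k^-1)).
    by rewrite sqrtrM ?sqr_ge0 // sqrtr_sqr ger0_norm.
  apply: le_trans (ler_norm _) _; rewrite e1 e2; exact: ler_wsqrtr.
have -> : g * k * ((1 + Num.sqrt (1 + 4 * k^-1)) / 2) = (b + b * Num.sqrt (1 + 4 * k^-1)) / 2.
  by rewrite /b; ring.
rewrite ler_pdivlMr //; lra.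
Qed.

Lemma part2 (q rho kappa Delta : R) : 0 < q -> q <= 1 -> 0 < rho -> 0 < kappa -> 0 < Delta ->
  rho `^ (1 - q / 2) * (rho `^ (2 / q - 1) + 1) `^ (q / 2) * kappa `^ q * Delta < 1 ->
  2 `^ (- (q / 2)) * (1 + Num.sqrt (1 + 4 * kappa ^- 2 * Delta `^ (- (2 / q)))) `^ (q / 2)
    * kappa `^ q * Delta * rho `^ (1 - q / 2) < 1.
Proof.
move=> q0 q1 r0 k0 D0 H.
have qn0 : q != 0 by rewrite gt_eqF.
set p := q / 2.
have p0 : 0 < p by rewrite divr_gt0.
set W := Delta `^ (2 / q).
have W0 : 0 < W by rewrite powR_gt0.
set r := rho `^ (2 / q - 1).
have rr0 : 0 <= r by exact: powR_ge0.
have eD : Delta = W `^ p.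
  rewrite /W -powRrM (_ : 2 / q * p = 1) ?powRr1 ?(ltW D0) //.
  by rewrite /p; field.
have eK : kappa `^ q = (kappa ^+ 2) `^ p.
  have e2k : kappa ^+ 2 = kappa `^ 2 by rewrite (@powR_mulrn _ kappa 2) // ltW.
  rewrite e2k -powRrM.
  by rewrite (_ : 2 * p = q) // /p; field.
have eR : rho `^ (1 - p) = r `^ p.
  by rewrite /r -powRrM (_ : (2 / q - 1) * p = 1 - p) // /p; field.
set k2 := kappa ^+ 2 * W.
have k20 : 0 < k2 by rewrite mulr_gt0 // exprn_gt0.
have eInv : kappa ^- 2 * Delta `^ (- (2 / q)) = k2^-1.
  by rewrite powRN /k2 [RHS]invfM.
have H' : (r * (r + 1) * k2) `^ p < 1.
  move: H; rewrite eR eK {1}eD.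
  rewrite /k2 !powRM ?mulr_ge0 ?addr_ge0 ?ler01 ?exprn_ge0 ?(ltW k0) ?(ltW W0) //.
  by rewrite !mulrA.
have X1 := powR_lt1 p0 (mulr_ge0 (mulr_ge0 rr0 (addr_ge0 rr0 ler01)) (ltW k20)) H'.
set e := k2^-1.
have e0 : 0 < e by rewrite invr_gt0.
have ke : k2 * e = 1 by rewrite mulfV ?gt_eqF.
have rre : r * (r + 1) < e.
  by rewrite -(ltr_pM2r k20) mulVf ?gt_eqF.
set sq := Num.sqrt (1 + 4 * e).
have sq0 : 0 <= sq by exact: sqrtr_ge0.
have sq2 : sq ^+ 2 = 1 + 4 * e by rewrite sqr_sqrtr // addr_ge0 // mulr_ge0 // ltW.
have key : sq * r < 2 * e - r.
  have hpos : 0 < 2 * e - r.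
    have h2 : r <= r * (r + 1) by rewrite mulrDr mulr1 lerDr mulr_ge0.
    move: rre h2 e0; move: (r * (r + 1)) => X; clear; lra.
  rewrite -(ltr_pXn2r (_ : (0 < 2)%N)) ?nnegrE ?mulr_ge0 ?(ltW hpos) //.
  rewrite exprMn sq2.
  rewrite -subr_gt0.
  have -> : (2 * e - r) ^+ 2 - (1 + 4 * e) * r ^+ 2 = 4 * e * (e - r * (r + 1)) by ring.
  by rewrite mulr_gt0 ?subr_gt0 // mulr_gt0.
rewrite -[4 * kappa ^- 2 * _]mulrA eInv -/e -/sq eK eR eD.
have e2 : 2 `^ (- p) = (2^-1) `^ p by rewrite powRN powR_invr // ler0n.
rewrite e2.
have hsq : 0 <= 1 + sq by rewrite addr_ge0.
have h2 : 0 <= 2^-1 :> R by rewrite invr_ge0 ler0n.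
have hk : 0 <= kappa ^+ 2 by rewrite exprn_ge0 // ltW.
rewrite -(powRM _ h2 hsq) -(powRM _ (mulr_ge0 h2 hsq) hk).
rewrite -(powRM _ (mulr_ge0 (mulr_ge0 h2 hsq) hk) (ltW W0)).
rewrite -(powRM _ (mulr_ge0 (mulr_ge0 (mulr_ge0 h2 hsq) hk) (ltW W0)) rr0).
apply: (@lt_le_trans _ _ (1 `^ p)); last by rewrite powR1.
apply: gt0_ltr_powR => //; rewrite ?nnegrE ?ler01 //.
  by rewrite !mulr_ge0 // ltW.
have -> : 2^-1 * (1 + sq) * kappa ^+ 2 * W * r = ((1 + sq) * r) * k2 / 2.
  by rewrite /k2; field.
have h1 : (1 + sq) * r < 2 * e.
  by rewrite mulrDl mul1r (_ : 2 * e = r + (2 * e - r)) ?ltrD2l // addrC subrK.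
rewrite ltr_pdivrMr // mul1r.
apply: (@lt_le_trans _ _ (2 * e * k2)); first by rewrite ltr_pM2r.
by rewrite -mulrA [e * k2]mulrC ke mulr1.
Qed.


End Alg.

Section Vec.
Variable R : realType.

Definition dot k (u v : 'cV[R]_k) : R := \sum_i u i 0 * v i 0.
Definition ss k (u : 'cV[R]_k) : R := dot u u.
Definition rs k (S : {set 'I_k}) (x : 'cV[R]_k) : 'cV[R]_k :=
  \col_i (if i \in S then x i 0 else 0).

Lemma ss_ge0 k (u : 'cV[R]_k) : 0 <= ss u.
Proof. by rewrite /ss /dot sumr_ge0 // => i _; rewrite -expr2 sqr_ge0. Qed.

Lemma dotC k (u v : 'cV[R]_k) : dot u v = dot v u.
Proof. by rewrite /dot; apply: eq_bigr => i _; rewrite mulrC. Qed.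

Lemma norm2E k (u : 'cV[R]_k) : norm2 u = Num.sqrt (ss u).
Proof. by rewrite /norm2 /ss /dot; congr Num.sqrt; apply: eq_bigr => i _; rewrite expr2. Qed.

Lemma norm2_sq k (u : 'cV[R]_k) : norm2 u ^+ 2 = ss u.
Proof. by rewrite norm2E sqr_sqrtr // ss_ge0. Qed.

Lemma norm2_ge0 k (u : 'cV[R]_k) : 0 <= norm2 u.
Proof. by rewrite norm2E sqrtr_ge0. Qed.

Lemma norm2_powR k (u : 'cV[R]_k) q : norm2 u `^ q = ss u `^ (q / 2).
Proof.
by rewrite norm2E -powR12_sqrt ?ss_ge0 // -powRrM mulrC.
Qed.

Lemma dot_mulmx k l (M : 'M[R]_(k, l)) (u : 'cV[R]_l) (v : 'cV[R]_k) :
  dot (M *m u) v = dot u (M^T *m v).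
Proof.
rewrite /dot.
under eq_bigr do rewrite mxE big_distrl /=.
rewrite exchange_big /=; apply: eq_bigr => j _.
rewrite mxE big_distrr /=; apply: eq_bigr => i _.
by rewrite mxE mulrCA mulrA.
Qed.

Lemma CS_sq k (u v : 'cV[R]_k) : dot u v ^+ 2 <= ss u * ss v.
Proof.
set A := ss u; set B := ss v; set C := dot u v.
have B0 : 0 <= B by exact: ss_ge0.
have [Bz|Bnz] := eqVneq B 0.
  have v0 : forall i, v i 0 = 0.
    move=> i; apply/eqP; rewrite -sqrf_eq0 expr2; apply/eqP.
    apply: (psumr_eq0P _ Bz) => // j _; by rewrite -expr2 sqr_ge0.
  have -> : C = 0 by rewrite /C /dot big1 // => i _; rewrite v0 mulr0.
  by rewrite Bz expr2 !mulr0.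
have Bp : 0 < B by rewrite lt_def Bnz B0.
have H : 0 <= \sum_i (u i 0 * B - v i 0 * C) ^+ 2 by rewrite sumr_ge0 // => i _; rewrite sqr_ge0.
have E : \sum_i (u i 0 * B - v i 0 * C) ^+ 2 = B ^+ 2 * A - 2 * B * C * C + C ^+ 2 * B.
  rewrite /A /B /C /ss /dot.
  rewrite (eq_bigr (fun i => B ^+ 2 * (u i 0 * u i 0) - 2 * B * C * (u i 0 * v i 0)
     + C ^+ 2 * (v i 0 * v i 0))); last by move=> i _; rewrite /B /C /ss /dot; ring.
  by rewrite !big_split /= sumrN -!mulr_sumr.
rewrite E in H.
have : 0 <= B * (B * A - C ^+ 2).
  by have -> : B * (B * A - C ^+ 2) = B ^+ 2 * A - 2 * B * C * C + C ^+ 2 * B by ring.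
by rewrite pmulr_rge0 // subr_ge0 mulrC.
Qed.


Lemma CS k (u v : 'cV[R]_k) : dot u v <= norm2 u * norm2 v.
Proof.
rewrite !norm2E -sqrtrM ?ss_ge0 //.
apply: le_trans (ler_norm _) _.
rewrite -sqrtr_sqr; exact: ler_wsqrtr (CS_sq u v).
Qed.

Lemma ss_rs k (S : {set 'I_k}) x : ss (rs S x) = \sum_(i in S) x i 0 ^+ 2.
Proof.
rewrite /ss /dot [RHS]big_mkcond /=; apply: eq_bigr => i _; rewrite !mxE.
by case: ifP => _; [rewrite expr2 | rewrite mulr0].
Qed.

Lemma dot_rs k (S : {set 'I_k}) x : dot x (rs S x) = ss (rs S x).
Proof.
rewrite ss_rs /dot [RHS]big_mkcond /=; apply: eq_bigr => i _; rewrite !mxE.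
by case: ifP => _; [rewrite expr2 | rewrite mulr0].
Qed.

Lemma rs_split k (S : {set 'I_k}) x : x = rs S x + rs (~: S) x.
Proof.
apply/matrixP => i j; rewrite (ord1 j) !mxE in_setC.
by case: (i \in S) => /=; rewrite ?addr0 ?add0r.
Qed.

Lemma rs_sub k (B S : {set 'I_k}) x : B \subset S -> rs S x = rs B x + rs (S :\: B) x.
Proof.
move=> /subsetP BS; apply/matrixP => i j; rewrite (ord1 j) !mxE in_setD.
case iB : (i \in B) => /=; last by rewrite add0r.
by rewrite BS // addr0.
Qed.

Lemma ss_rs_sub k (B S : {set 'I_k}) x : B \subset S ->
  ss (rs S x) = ss (rs B x) + ss (rs (S :\: B) x).
Proof.
move=> BS; rewrite !ss_rs (big_setID B) /=.
by move/setIidPr: BS => ->.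
Qed.

Lemma ss_split k (S : {set 'I_k}) x : ss x = ss (rs S x) + ss (rs (~: S) x).
Proof.
have -> : ss x = ss (rs setT x).
  by rewrite ss_rs /ss /dot; apply: eq_big => [i|i _]; rewrite ?in_setT // expr2.
by rewrite (@ss_rs_sub _ S setT) ?subsetT // setTD.
Qed.

Lemma ss_rs_mono k (B S : {set 'I_k}) x : B \subset S -> ss (rs B x) <= ss (rs S x).
Proof. by move=> BS; rewrite (ss_rs_sub x BS) lerDl ss_ge0. Qed.

Lemma ksparse_rs d k (S : {set 'I_d}) x : (#|S| <= k)%N -> ksparse k (rs S x).
Proof.
move=> Sk; rewrite /ksparse; apply: leq_trans Sk; apply: subset_leq_card.
by apply/subsetP => i; rewrite inE mxE; case: ifP => //; rewrite eqxx.
Qed.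

Lemma normq_add k q (u v : 'cV[R]_k) : 0 < q -> q <= 1 ->
  normq_q q (u + v) <= normq_q q u + normq_q q v.
Proof.
move=> q0 q1; rewrite /normq_q -big_split /=; apply: ler_sum => i _; rewrite mxE.
apply: le_trans (powR_subadd q0 q1 (normr_ge0 _) (normr_ge0 _)).
by apply: ge0_ler_powR; rewrite ?nnegrE ?(ltW q0) ?addr_ge0 // ler_normD.
Qed.

Lemma normq_opp k q (u : 'cV[R]_k) : normq_q q (- u) = normq_q q u.
Proof. by rewrite /normq_q; apply: eq_bigr => i _; rewrite mxE normrN. Qed.

Lemma ss_eq0 k (u : 'cV[R]_k) : ss u = 0 -> u = 0.
Proof.
move=> H; apply/matrixP => i j; rewrite (ord1 j) mxE.
apply/eqP; rewrite -sqrf_eq0 expr2; apply/eqP.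
by apply: (psumr_eq0P _ H) => // l _; rewrite -expr2 sqr_ge0.
Qed.

Lemma exists_top d (x : 'cV[R]_d) (S : {set 'I_d}) k :
  exists B : {set 'I_d}, [/\ B \subset S, #|B| = minn k #|S| &
    forall i j, i \in B -> j \in S :\: B -> `|x j 0| <= `|x i 0|].
Proof.
elim: k => [|k [B [BS cB dom]]].
  exists set0; split; first exact: sub0set.
  - by rewrite cards0 min0n.
  - by move=> i j; rewrite in_set0.
have [hk|hk] := leqP #|S| k.
  exists B; split => //.
  by rewrite cB; lia.
have cBk : #|B| = k by rewrite cB; apply/minn_idPl; exact: ltnW.
have : S :\: B != set0.
  apply/negP; rewrite setD_eq0 => SB.
  by have := subset_leq_card SB; rewrite cBk; lia.
case/set0Pn => j0 j0in.
case: (@arg_maxP _ _ _ j0 (mem (S :\: B)) (fun j => `|x j 0|) j0in) => m mP0 mmax.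
have mP : m \in S :\: B := mP0.
exists (m |: B); split.
- rewrite subUset sub1set BS andbT; move: mP; rewrite inE => /andP[] //.
- rewrite cardsU1; move: mP; rewrite inE => /andP[-> _].
  by rewrite cBk add1n; symmetry; apply/minn_idPl.
- move=> i j; rewrite in_setU1 => /predU1P[-> | iB] jin;
    have jSB : j \in S :\: B by move: jin; rewrite !inE negb_or => /andP[/andP[_ ->] ->].
  + exact: mmax.
  + exact: dom.
Qed.

Lemma abs_powR_sq (q r : R) : 0 < q -> (`|r| `^ q) `^ (2 / q) = r ^+ 2.
Proof.
move=> q0; rewrite -powRrM mulrC divfK ?gt_eqF //.
by rewrite (@powR_mulrn _ _ 2) ?normr_ge0 // real_normK ?num_real.
Qed.

Lemma top_bound d (x : 'cV[R]_d) (q : R) (a : nat) (S B : {set 'I_d}) :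
  (0 < a)%N -> 0 < q -> B \subset S -> #|B| = minn a #|S| ->
  (forall i j, i \in B -> j \in S :\: B -> `|x j 0| <= `|x i 0|) ->
  forall i, i \in S :\: B -> `|x i 0| `^ q <= (\sum_(j in B) `|x j 0| `^ q) / a%:R.
Proof.
move=> a0 q0 BS cB dom i iS'.
have ap : 0 < a%:R :> R by rewrite ltr0n.
have cBa : #|B| = a.
  case: (eqVneq #|B| a) => // cBa.
  have BeS : B = S.
    apply/eqP; rewrite eqEcard BS /= cB.
    case: (leqP a #|S|) => h; first by move: cBa; rewrite cB (minn_idPl h) eqxx.
    by [].
  by move: iS'; rewrite BeS setDv in_set0.
rewrite ler_pdivlMr // -cBa mulr_natr -sumr_const.
apply: ler_sum => j jB.
apply: ge0_ler_powR; rewrite ?nnegrE ?normr_ge0 ?(ltW q0) //.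
exact: dom.
Qed.

Section Frame.
Variables (n d : nat) (D : 'M[R]_(n, d)) (L U : R).
Hypothesis L0 : 0 < L.
Hypothesis fr : is_frame D L U.

Lemma frame_lo (f : 'cV[R]_n) : L * ss f <= ss (D^T *m f).
Proof. by have /andP[] := fr f; rewrite !norm2_sq. Qed.

Lemma frame_hi (f : 'cV[R]_n) : ss (D^T *m f) <= U * ss f.
Proof. by have /andP[] := fr f; rewrite !norm2_sq. Qed.

Lemma G_unit : D *m D^T \in unitmx.
Proof.
rewrite -row_free_unit -kermx_eq0; apply/eqP.
have HK := mulmx_ker (D *m D^T).
apply/row_matrixP => i; rewrite row0.
set r := row i _.
have r0 : r *m (D *m D^T) = 0 by rewrite /r -row_mul HK row0.
have f0 : (D *m D^T) *m r^T = 0.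
  have GT : (D *m D^T)^T = D *m D^T by rewrite trmx_mul trmxK.
  by rewrite -{1}GT -trmx_mul r0 trmx0.
have : ss (D^T *m r^T) = 0.
  by rewrite /ss dot_mulmx trmxK mulmxA f0 /dot big1 // => j _; rewrite !mxE mulr0.
move=> H; have := frame_lo r^T; rewrite H => H2.
have : ss r^T = 0.
  apply/eqP; rewrite eq_le ss_ge0 andbT.
  by rewrite -(pmulr_rle0 _ L0).
by move/ss_eq0 => /(congr1 trmx); rewrite trmxK trmx0.
Qed.

Lemma dagger_left (h : 'cV[R]_n) : dagger D *m (D^T *m h) = h.
Proof.
by rewrite /dagger -mulmxA [D *m (D^T *m h)]mulmxA mulmxA mulVmx ?G_unit // mul1mx.
Qed.

Lemma G_dagger (v : 'cV[R]_d) : (D *m D^T) *m (dagger D *m v) = D *m v.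
Proof. by rewrite /dagger !mulmxA mulmxV ?G_unit // mul1mx. Qed.

Lemma dagger_bound (v : 'cV[R]_d) : L * ss (dagger D *m v) <= ss v.
Proof.
set y := dagger D *m v.
have e : ss (D^T *m y) = dot (D^T *m y) v.
  rewrite /ss dot_mulmx trmxK mulmxA G_dagger dotC dot_mulmx dotC //.
have := CS (D^T *m y) v; rewrite -e.
rewrite -[ss (D^T *m y)]norm2_sq -(norm2_sq v).
have n1 := norm2_ge0 (D^T *m y); have n2 := norm2_ge0 v.
move=> H.
have : norm2 (D^T *m y) ^+ 2 <= norm2 v ^+ 2 by nra.
rewrite !norm2_sq => H2.
exact: le_trans (frame_lo y) H2.
Qed.

End Frame.

Section Tail.
Variables (m n d : nat) (A : 'M[R]_(m, n)) (D : 'M[R]_(n, d)) (L U q dl : R) (a : nat).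
Variable x : 'cV[R]_d.
Hypotheses (q0 : 0 < q) (q1 : q <= 1) (L0 : 0 < L) (fr : is_frame D L U).
Hypotheses (a0 : (0 < a)%N) (rip : DqRIP A D q a dl).

Let q20 : 0 < q / 2. Proof. by rewrite divr_gt0. Qed.
Let q21 : q / 2 <= 1. Proof. rewrite ler_pdivrMr // mul1r; apply: (le_trans q1); by rewrite ler1n. Qed.

Lemma tail_empty (c : R) : 0 <= c ->
  exists Phi : R, [/\ ss (rs set0 x) `^ (q / 2) <= Phi,
    L `^ (q / 2) * normq_q q (A *m (dagger D *m rs set0 x)) <= (1 + dl) * Phi &
    Phi * a%:R `^ (1 - q / 2) <= a%:R * c + \sum_(i in set0) `|x i 0| `^ q].
Proof.
move=> c0.
have rs0 : rs set0 x = 0 by apply/matrixP => i j; rewrite !mxE in_set0.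
exists 0; split.
- by rewrite rs0 /ss /dot big1 ?powR0 ?gt_eqF // => i _; rewrite !mxE mulr0.
- rewrite rs0 !mulmx0 /normq_q big1 ?mulr0 // => i _.
  by rewrite !mxE normr0 powR0 // gt_eqF.
- by rewrite mul0r big_set0 addr0 mulr_ge0.
Qed.

Lemma tail N : forall (S : {set 'I_d}) (c : R), (#|S| <= N)%N -> 0 <= c ->
  (forall i, i \in S -> `|x i 0| `^ q <= c) ->
  exists Phi : R, [/\ ss (rs S x) `^ (q / 2) <= Phi,
    L `^ (q / 2) * normq_q q (A *m (dagger D *m rs S x)) <= (1 + dl) * Phi &
    Phi * a%:R `^ (1 - q / 2) <= a%:R * c + \sum_(i in S) `|x i 0| `^ q].
Proof.
have dl0 : 0 <= dl by case: rip => /andP[].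
have ap : 0 < a%:R :> R by rewrite ltr0n.
elim: N => [|N IH] S c hS c0 hc.
  move: hS; rewrite leqn0 cards_eq0 => /eqP ->; exact: tail_empty.
have [->|Sn0] := eqVneq S set0; first exact: tail_empty.
have [B [BS cB dom]] := exists_top x S a.
set S' := S :\: B.
have Sp : (0 < #|S|)%N by rewrite card_gt0.
have cS' : (#|S'| <= N)%N.
  have B1 : (0 < #|B|)%N by rewrite cB leq_min a0 Sp.
  rewrite /S' cardsD; move/setIidPr: (BS) => ->; move: hS B1; clear; lia.
set c' := (\sum_(j in B) `|x j 0| `^ q) / a%:R.
have c'0 : 0 <= c' by rewrite divr_ge0 ?ler0n // sumr_ge0 // => j _; exact: powR_ge0.
have hc' : forall i, i \in S' -> `|x i 0| `^ q <= c'.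
  move=> i iS'.
  have cBa : #|B| = a.
    case: (eqVneq #|B| a) => // cBa.
    have BeS : B = S.
      apply/eqP; rewrite eqEcard BS /= cB.
      case: (leqP a #|S|) => h; first by move: cBa; rewrite cB (minn_idPl h) eqxx.
      by [].
    by move: iS'; rewrite /S' BeS setDv in_set0.
  rewrite ler_pdivlMr // -cBa mulr_natr -sumr_const.
  apply: ler_sum => j jB.
  apply: ge0_ler_powR; rewrite ?nnegrE ?normr_ge0 ?(ltW q0) //.
  exact: dom.
have [Phi' [H1 H2 H3]] := IH S' c' cS' c'0 hc'.
exists (ss (rs B x) `^ (q / 2) + Phi'); split.
- rewrite (ss_rs_sub x BS).
  apply: le_trans (powR_subadd q20 q21 (ss_ge0 _) (ss_ge0 _)) _.
  by rewrite lerD2l.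
- rewrite (rs_sub x BS) !mulmxDr.
  apply: le_trans (ler_wpM2l (powR_ge0 _ _) (normq_add _ _ q0 q1)) _.
  rewrite !mulrDr; apply: lerD; last exact: H2.
  have cBa : (#|B| <= a)%N by rewrite cB geq_minl.
  have /andP[_ Hup] := rip.2 (rs B x) (ksparse_rs x cBa).
  apply: le_trans (ler_wpM2l (powR_ge0 _ _) Hup) _.
  rewrite norm2_powR mulrCA; apply: ler_wpM2l; first by rewrite addr_ge0.
  rewrite -powRM ?(ltW L0) ?ss_ge0 //.
  apply: ge0_ler_powR; rewrite ?nnegrE ?mulr_ge0 ?ss_ge0 ?(ltW L0) ?(ltW q20) ?(ltW q0) //.
  2: exact: dagger_bound L0 fr _.
  by rewrite invr_ge0 ler0n.
- rewrite mulrDl.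
  have blk : ss (rs B x) `^ (q / 2) * a%:R `^ (1 - q / 2) <= a%:R * c.
    have e1 : ss (rs B x) <= a%:R * c `^ (2 / q).
      rewrite ss_rs.
      apply: le_trans (_ : \sum_(j in B) c `^ (2 / q) <= _).
        apply: ler_sum => j jB; rewrite -(abs_powR_sq _ q0).
        apply: ge0_ler_powR; rewrite ?nnegrE ?powR_ge0 ?divr_ge0 ?(ltW q0) //.
        by apply: hc; move/subsetP: BS; apply.
      rewrite sumr_const -[_ *+ #|B|]mulr_natl; apply: ler_wpM2r; first exact: powR_ge0.
      by rewrite ler_nat cB geq_minl.
    have e2 : ss (rs B x) `^ (q / 2) <= a%:R `^ (q / 2) * c.
      apply: le_trans (_ : (a%:R * c `^ (2 / q)) `^ (q / 2) <= _).
        by apply: ge0_ler_powR; rewrite ?nnegrE ?(ltW q20) ?ss_ge0 ?mulr_ge0 ?ler0n ?powR_ge0.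
      rewrite powRM ?ler0n ?powR_ge0 // -powRrM.
      rewrite (_ : 2 / q * (q / 2) = 1); first by rewrite powRr1.
      by field; rewrite gt_eqF.
    apply: le_trans (ler_wpM2r (powR_ge0 _ _) e2) _.
    rewrite mulrAC -powRD; last by apply/implyP => _; rewrite pnatr_eq0 -lt0n.
    by rewrite (_ : q / 2 + (1 - q / 2) = 1) ?powRr1 ?ler0n //; ring.
  have eS : \sum_(i in S) `|x i 0| `^ q =
      \sum_(i in B) `|x i 0| `^ q + \sum_(i in S') `|x i 0| `^ q.
    by rewrite (big_setID B) /=; move/setIidPr: (BS) => ->.
  have ac' : a%:R * c' = \sum_(i in B) `|x i 0| `^ q.
    by rewrite /c' mulrC divfK // gt_eqF.
  rewrite eS; move: H3; rewrite ac' => H3; lra.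
Qed.

End Tail.

End Vec.

Theorem lemma2p8 (R : realType) (m n d : nat) (q L U : R)
  (D : 'M[R]_(n, d)) (A : 'M[R]_(m, n)) (s a : nat) (delta_a delta_sa : R) :
  0 < q -> q <= 1 ->
  0 < L -> L <= U -> is_frame D L U ->
  (0 < s)%N -> (s < a)%N ->
  RIP_const A D q a delta_a ->
  RIP_const A D q (s + a) delta_sa ->
  let kappa := U / L in
  let rho := s%:R / a%:R in
  let Delta := (1 + delta_a) / (1 - delta_sa) in
  let theta := 2 `^ (- (q / 2))
      * (1 + Num.sqrt (1 + 4 * kappa ^- 2 * Delta `^ (- (2 / q)))) `^ (q / 2)
      * kappa `^ q * Delta * rho `^ (1 - q / 2) in
  (forall (h : 'cV[R]_n) (T : {set 'I_d}),
     largest_set s (D^T *m h) T ->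
     normq_q_on q (D^T *m h) T
       <= theta * normq_q_on q (D^T *m h) (~: T)
          + theta * L `^ (q / 2) * a%:R `^ (1 - q / 2) * normq_q q (A *m h)
            / (1 + delta_a))
  /\
  (rho `^ (1 - q / 2) * (rho `^ (2 / q - 1) + 1) `^ (q / 2) * kappa `^ q
     * (1 + delta_a) < 1 - delta_sa -> theta < 1).
Proof.
move=> q0 q1 L0 LU fr s0 sa [ripa _] [ripsa _] kappa rho Delta theta.
have dla0 : 0 <= delta_a by case: ripa => /andP[].
have dsa1 : delta_sa < 1 by case: ripsa => /andP[_ ->].
have a0 : (0 < a)%N by exact: ltn_trans s0 sa.
have ap : 0 < a%:R :> R by rewrite ltr0n.
have sp : 0 < s%:R :> R by rewrite ltr0n.
have U0 : 0 < U by exact: lt_le_trans L0 LU.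
have kap0 : 0 < kappa by rewrite divr_gt0.
have dsap : 0 < 1 - delta_sa by rewrite subr_gt0.
have dlap : 0 < 1 + delta_a by rewrite ltr_wpDr.
have Dp : 0 < Delta by rewrite divr_gt0.
have rho0 : 0 < rho by rewrite divr_gt0.
split; last first.
  move=> H; apply: part2 => //.
  by rewrite /Delta mulrA ltr_pdivrMr // mul1r.
move=> h T [cT domT].
set x := D^T *m h.
have [T1 [T1s cT1 dom1]] := exists_top x (~: T) a.
set S01 := T :|: T1.
set Sr := ~: T :\: T1.
have eSr : ~: S01 = Sr by rewrite /S01 /Sr setCU setDE.
set cT1q := (\sum_(j in T1) `|x j 0| `^ q) / a%:R.
have c0 : 0 <= cT1q by rewrite divr_ge0 ?ler0n // sumr_ge0 // => j _; exact: powR_ge0.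
have hc := top_bound a0 q0 T1s cT1 dom1.
have [Phi [H1 H2 H3]] := @tail R m n d A D L U q delta_a a x q0 q1 L0 fr a0 ripa
   #|Sr| Sr cT1q (leqnn _) c0 hc.
set beta := normq_q_on q x (~: T).
have eb : beta = \sum_(j in T1) `|x j 0| `^ q + \sum_(j in Sr) `|x j 0| `^ q.
  by rewrite /beta /normq_q_on (big_setID T1) /=; move/setIidPr: (T1s) => ->.
set a' := a%:R `^ (1 - q / 2).
have a'p : 0 < a' by rewrite powR_gt0.
have H3' : Phi * a' <= beta.
  by move: H3; rewrite /cT1q [a%:R * _]mulrC divfK ?gt_eqF // eb.
set NA := normq_q q (A *m h).
have NA0 : 0 <= NA by rewrite /NA /normq_q sumr_ge0 // => i _; exact: powR_ge0.
set Lq := L `^ (q / 2).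
have Lq0 : 0 <= Lq by exact: powR_ge0.
set E := Lq * a' * NA / (1 + delta_a).
have E0 : 0 <= E by rewrite /E divr_ge0 ?mulr_ge0 ?(ltW a'p) ?(ltW dlap).
set K := (beta + E) / a'.
have PhiK : Phi <= K by rewrite /K ler_pdivlMr //; apply: le_trans H3' _; rewrite lerDl.
have q20 : 0 < q / 2 by rewrite divr_gt0.
have q2lt1 : q / 2 < 1.
  rewrite ltr_pdivrMr // mul1r; apply: le_lt_trans q1 _; by rewrite ltr1n.
set u := dagger D *m rs S01 x.
have hx : dagger D *m x = h := dagger_left L0 fr h.
have hsplit : dagger D *m x = u + dagger D *m rs Sr x.
  by rewrite {1}(rs_split S01 x) eSr mulmxDr.
set Nr := normq_q q (A *m (dagger D *m rs Sr x)).
have NAu : normq_q q (A *m u) <= NA + Nr.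
  have Au : A *m u = A *m h + - (A *m (dagger D *m rs Sr x)).
    by rewrite -hx hsplit mulmxDr addrK.
  by rewrite Au; apply: le_trans (normq_add _ _ q0 q1) _; rewrite normq_opp.
have cS01 : (#|S01| <= s + a)%N.
  have cT1a : (#|T1| <= a)%N by rewrite cT1 geq_minl.
  rewrite /S01 cardsU cT; move: cT1a; clear; lia.
have lowu : (1 - delta_sa) * ss u `^ (q / 2) <= normq_q q (A *m u).
  by have /andP[+ _] := ripsa.2 _ (ksparse_rs x cS01); rewrite norm2_powR.
set Su := ss u `^ (q / 2).
have Lu : (L * ss u) `^ (q / 2) <= Delta * K.
  rewrite powRM ?(ltW L0) ?ss_ge0 // -/Lq -/Su.
  rewrite -(ler_pM2l dsap).
  have G1 : (1 - delta_sa) * (Lq * Su) <= Lq * NA + (1 + delta_a) * Phi.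
    rewrite mulrCA; apply: le_trans (ler_wpM2l Lq0 (le_trans lowu NAu)) _.
    by rewrite mulrDr lerD2l.
  apply: le_trans G1 _.
  have G3 : (1 - delta_sa) * (Delta * K) = (1 + delta_a) * (beta / a') + Lq * NA.
    rewrite /Delta /K /E; field.
    by rewrite (gt_eqF a'p) (gt_eqF dlap) (gt_eqF dsap).
  rewrite G3 [X in _ <= X]addrC lerD2l; apply: ler_wpM2l; first exact: ltW dlap.
  by rewrite ler_pdivlMr.
set W := Delta `^ (2 / q).
set g := K `^ (2 / q).
have Phi0 : 0 <= Phi by apply: le_trans H1; exact: powR_ge0.
have K0 : 0 <= K by exact: le_trans Phi0 PhiK.
have g0 : 0 <= g by exact: powR_ge0.
have W0 : 0 < W by exact: powR_gt0.
have iq : (q / 2)^-1 = 2 / q by rewrite invf_div.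
have Lu2 : L * ss u <= W * g.
  have := powR_le_inv q20 (mulr_ge0 (ltW L0) (ss_ge0 u)) (mulr_ge0 (ltW Dp) K0) Lu.
  by rewrite iq powRM ?(ltW Dp).
have Sr2 : ss (rs Sr x) <= g.
  by have := powR_le_inv q20 (ss_ge0 _) K0 (le_trans H1 PhiK); rewrite iq.
set Y := ss (rs S01 x).
have hY : Y = dot (D^T *m h) (D^T *m u).
  have e1 : dot (D^T *m h) (rs S01 x) = dot h (D *m rs S01 x) by rewrite dot_mulmx trmxK.
  have e2 : D *m rs S01 x = D *m (D^T *m u) by rewrite mulmxA /u (G_dagger L0 fr).
  have e3 : dot h (D *m (D^T *m u)) = dot (D^T *m h) (D^T *m u) by rewrite dot_mulmx trmxK.
  rewrite /Y -dot_rs.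
  change (dot (D^T *m h) (rs S01 x) = dot (D^T *m h) (D^T *m u)).
  by rewrite e1 e2 e3.
have Y0 : 0 <= Y by exact: ss_ge0.
have hY2 : Y ^+ 2 <= (U * ss h) * (U * ss u).
  have CSy := CS (D^T *m h) (D^T *m u); rewrite -hY in CSy.
  apply: le_trans (_ : (norm2 (D^T *m h) * norm2 (D^T *m u)) ^+ 2 <= _).
    by rewrite !expr2; apply: ler_pM.
  rewrite exprMn !norm2_sq; apply: ler_pM; rewrite ?ss_ge0 //.
    exact: frame_hi fr h.
  exact: frame_hi fr u.
have hLh : L * ss h <= Y + g.
  apply: le_trans (frame_lo fr h) _.
  rewrite -/x (ss_split S01 x) eSr -/Y lerD2l //.
have k0 : 0 < kappa ^+ 2 * W by rewrite mulr_gt0 // exprn_gt0.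
have Hq : Y ^+ 2 <= (kappa ^+ 2 * W) * g * (Y + g).
  have HH : L ^+ 2 * Y ^+ 2 <= U ^+ 2 * ((Y + g) * (W * g)).
    apply: le_trans (_ : L ^+ 2 * ((U * ss h) * (U * ss u)) <= _).
      by apply: ler_wpM2l; rewrite ?sqr_ge0.
    have -> : L ^+ 2 * (U * ss h * (U * ss u)) = U ^+ 2 * ((L * ss h) * (L * ss u)) by ring.
    apply: ler_wpM2l; first exact: sqr_ge0.
    apply: ler_pM; rewrite ?mulr_ge0 ?ss_ge0 ?(ltW L0) //.
  have -> : (kappa ^+ 2 * W) * g * (Y + g) = U ^+ 2 * ((Y + g) * (W * g)) / L ^+ 2.
    by rewrite /kappa; field; rewrite gt_eqF.
  by rewrite ler_pdivlMr ?exprn_gt0 // mulrC.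
have Yb := quad Y0 g0 k0 Hq.
set sq := Num.sqrt (1 + 4 * (kappa ^+ 2 * W)^-1).
set c := (1 + sq) / 2.
have sq0 : 0 <= sq by exact: sqrtr_ge0.
have cc0 : 0 <= c by rewrite divr_ge0 ?addr_ge0.
have sx : normq_q_on q x T <= s%:R `^ (1 - q / 2) * ss (rs T x) `^ (q / 2).
  rewrite /normq_q_on ss_rs -cT.
  have e : forall i, `|x i 0| `^ q = (x i 0 ^+ 2) `^ (q / 2).
    move=> i.
    have e2 : `|x i 0| `^ 2 = x i 0 ^+ 2.
      by rewrite (@powR_mulrn _ _ 2) ?normr_ge0 // real_normK // num_real.
    by rewrite -e2 -powRrM (_ : 2 * (q / 2) = q) //; field.
  under eq_bigr do rewrite e.
  apply: powR_pm => // i; exact: sqr_ge0.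
have step2 : ss (rs T x) `^ (q / 2) <= Y `^ (q / 2).
  apply: ge0_ler_powR; rewrite ?nnegrE ?ss_ge0 ?(ltW q20) //.
  exact: ss_rs_mono x (subsetUl T T1).
have step3 : Y `^ (q / 2) <= (g * (kappa ^+ 2 * W) * c) `^ (q / 2).
  apply: ge0_ler_powR; [exact: ltW q20 | by rewrite nnegrE | | exact: Yb].
  by rewrite nnegrE; apply: mulr_ge0 => //; apply: mulr_ge0 => //; exact: ltW k0.
have fin : s%:R `^ (1 - q / 2) * (g * (kappa ^+ 2 * W) * c) `^ (q / 2) = theta * (beta + E).
  have eg : g `^ (q / 2) = K.
    by rewrite /g -powRrM (_ : 2 / q * (q / 2) = 1) ?powRr1 //; field; rewrite gt_eqF.
  have ek : kappa ^+ 2 = kappa `^ 2 by rewrite (@powR_mulrn _ kappa 2) // ltW.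
  have ek2 : (kappa ^+ 2) `^ (q / 2) = kappa `^ q.
    by rewrite ek -powRrM (_ : 2 * (q / 2) = q) //; field.
  have eW : W `^ (q / 2) = Delta.
    by rewrite /W -powRrM (_ : 2 / q * (q / 2) = 1) ?powRr1 ?(ltW Dp) //; field; rewrite gt_eqF.
  have ec : c `^ (q / 2) = 2 `^ (- (q / 2)) * (1 + sq) `^ (q / 2).
    rewrite /c powRM ?addr_ge0 ?invr_ge0 ?ler0n // powR_invr ?ler0n // powRN mulrC //.
  have esq : sq = Num.sqrt (1 + 4 * kappa ^- 2 * Delta `^ (- (2 / q))).
    by rewrite /sq -[4 * kappa ^- 2 * _]mulrA powRN [(kappa ^+ 2 * W)^-1]invfM.
  have erho : rho `^ (1 - q / 2) = s%:R `^ (1 - q / 2) / a'.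
    by rewrite /rho powRM ?ler0n ?invr_ge0 // powR_invr ?ler0n.
  rewrite (powRM _ (mulr_ge0 g0 (ltW k0)) cc0) (powRM _ g0 (ltW k0)).
  rewrite (powRM _ (exprn_ge0 2 (ltW kap0)) (ltW W0)).
  rewrite eg ek2 eW ec /theta -esq erho /K.
  field; by rewrite gt_eqF.
apply: le_trans sx _.
apply: le_trans (ler_wpM2l (powR_ge0 _ _) (le_trans step2 step3)) _.
by rewrite fin /E mulrDr !mulrA.
Qed.
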